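(* Let $\vec \theta \in \Lambda_0$. There are constants $c_{\{i,j\}}\in \{0, 1, \dots, g-1\}$, for $1 \leq i < j < k$, such that \[\vec \theta \equiv \sum_{1 \leq i < j < k} c_{\{i,j\}} \vec \alpha^{\{i,j\}} \pmod{2 \pi} \] (componentwise). Moreover, this representation of $\vec \theta$ is unique.
   Context: Let $g\ge 2$, $k\ge 2$ be integers, $\mathbb Z_g$ the integers mod $g$, and $d=\binom{k}{2}(g-1)$. Index the coordinates of $\mathbb R^d$ by pairs $(\{i,j\},a)$ with $1\le i<j\le k$ and $a\in\mathbb Z_g\setminus\{0\}$. Define $Z:(\mathbb Z_g)^k\to\mathbb R^d$ by $[Z(\vec x)]_{\{i,j\},a}=1-1/g$ if $x_i-x_j=a$ and $-1/g$ otherwise. Define $\Phi(\vec\theta)=\sum_{\vec x\in(\mathbb Z_g)^k} g^{-k}e^{i\vec\theta\cdot Z(\vec x)}$ for $\vec\theta\in\mathbb R^d$, $\Lambda=\{\vec\theta\in\mathbb R^d: |\Phi(\vec\theta)|=1\}$, and $\Lambda_0=\Lambda\cap[-\pi,\pi)^d$. Let $\mathbbm{1}_{\{i,j\},a}$ be the standard basis vector of $\mathbb R^d$ with a $1$ in coordinate $(\{i,j\},a)$. For $1\le i<j<k$ define \[ \vec \alpha^{\{i,j\}} = \sum_{n=1}^{g-1} \frac{2\pi n}{g} \mathbbm{1}_{\{i,j\},n}+ \sum_{n=1}^{g-1} \frac{2 \pi(g-n)}{g} \mathbbm{1}_{\{i,k\},n} + \sum_{n=1}^{g-1} \frac{2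 \pi n}{g} \mathbbm{1}_{\{j,k\},n},\] where $n$ is an integer in $[1,g-1]$ except in the subscripts, where it denotes the corresponding element of $\mathbb Z_g$. Congruence of vectors mod $2\pi$ means componentwise congruence. *)

(* Defs.v *)
From HB Require Import structures.
From mathcomp Require Import all_boot all_order all_algebra.
From mathcomp Require Import reals trigo.
Set Implicit Arguments. Unset Strict Implicit. Unset Printing Implicit Defensive.
Import Order.TTheory GRing.Theory Num.Theory.
Local Open Scope ring_scope.

(* Indices are 0-based: {1,...,k} is 'I_k, and the distinguished index k is
   the ordinal with value k.-1.  Z_g is 'Z_g (used only with 2 <= g). *)

(* Coordinates of R^d: triples ({i,j}, a) with i < j and a <> 0 in Z_g. *)
Definition dcoord (k g : nat) :=
  {p : 'I_k * 'I_k * 'Z_g | ((nat_of_ord p.1.1 < nat_of_ord p.1.2)%N && (p.2 != 0))}.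

Definition ci k g (p : dcoord k g) : 'I_k := (val p).1.1.
Definition cj k g (p : dcoord k g) : 'I_k := (val p).1.2.
Definition ca k g (p : dcoord k g) : 'Z_g := (val p).2.

Definition Zvec (R : realType) k g (x : {ffun 'I_k -> 'Z_g}) (p : dcoord k g) : R :=
  if x (ci p) - x (cj p) == ca p then 1 - (g%:R)^-1 else - (g%:R)^-1.

Definition phase (R : realType) k g (theta : dcoord k g -> R)
  (x : {ffun 'I_k -> 'Z_g}) : R :=
  \sum_(p : dcoord k g) theta p * @Zvec R k g x p.

(* Real and imaginary parts of Phi(theta) = sum_x g^{-k} e^{i theta.Z(x)}. *)
Definition Phi_re (R : realType) k g (theta : dcoord k g -> R) : R :=
  \sum_(x : {ffun 'I_k -> 'Z_g}) ((g%:R ^+ k)^-1 * cos (phase theta x)).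
Definition Phi_im (R : realType) k g (theta : dcoord k g -> R) : R :=
  \sum_(x : {ffun 'I_k -> 'Z_g}) ((g%:R ^+ k)^-1 * sin (phase theta x)).

Definition Phi_abs (R : realType) k g (theta : dcoord k g -> R) : R :=
  Num.sqrt (Phi_re theta ^+ 2 + Phi_im theta ^+ 2).

Definition Lambda (R : realType) k g (theta : dcoord k g -> R) : Prop :=
  Phi_abs theta = 1.

Definition Lambda0 (R : realType) k g (theta : dcoord k g -> R) : Prop :=
  Lambda theta /\ (forall p, - pi <= theta p < pi).

Definition ijpairs (k : nat) :=
  {q : 'I_k * 'I_k | ((nat_of_ord q.1 < nat_of_ord q.2)%N && (nat_of_ord q.2 < k.-1)%N)}.

Definition alpha (R : realType) k g (q : ijpairs k) (p : dcoord k g) : R :=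
  let i := (val q).1 in let j := (val q).2 in let n := nat_of_ord (ca p) in
  if (ci p == i) && (cj p == j) then 2 * pi * n%:R / g%:R
  else if (ci p == i) && (nat_of_ord (cj p) == k.-1) then 2 * pi * (g - n)%N%:R / g%:R
  else if (ci p == j) && (nat_of_ord (cj p) == k.-1) then 2 * pi * n%:R / g%:R
  else 0.

Definition congr_2pi (R : realType) k g (u v : dcoord k g -> R) : Prop :=
  forall p, exists m : int, u p - v p = m%:~R * (2 * pi).

Definition alpha_comb (R : realType) k g (c : {ffun ijpairs k -> 'I_g}) : dcoord k g -> R :=
  fun p => \sum_(q : ijpairs k) (nat_of_ord (c q))%:R * @alpha R k g q p.

(* Main.v *)
Require Import Defs.
From HB Require Import structures.
From mathcomp Require Import all_boot all_order all_algebra.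
From mathcomp Require Import reals trigo.
From mathcomp Require Import ring lra zify.
Set Implicit Arguments. Unset Strict Implicit. Unset Printing Implicit Defensive.
Import Order.TTheory GRing.Theory Num.Theory.
Local Open Scope ring_scope.


Section Cos.
Variable R : realType.

Lemma cosDz (x : R) (m : int) : cos (x + m%:~R * (2 * pi)) = cos x.
Proof.
have P := @periodicn R R cos (pi *+ 2) (@cosD2pi R).
case: m => n.
  have -> : (Posz n)%:~R * (2 * pi) = pi *+ 2 *+ n :> R.
    by rewrite pmulrn mulr_natl [2 * pi]mulr_natl.
  by rewrite P.
rewrite NegzE mulrNz mulNr.
have -> : (n.+1)%:~R * (2 * pi) = pi *+ 2 *+ n.+1 :> R.
  by rewrite pmulrn mulr_natl [2 * pi]mulr_natl.
by rewrite -[in RHS](subrK (pi *+ 2 *+ n.+1) x) P.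
Qed.

Lemma cos_eq1 (t : R) : cos t = 1 -> exists m : int, t = m%:~R * (2 * pi).
Proof.
move=> ct.
have pi0 := @pi_gt0 R.
have p2 : 0 < 2 * pi :> R by rewrite mulr_gt0.
set m := Num.floor (t / (2 * pi)).
have h1 := floor_le (t / (2 * pi)); have h2 := floorD1_gt (t / (2 * pi)).
rewrite -/m in h1 h2.
set r := t - m%:~R * (2 * pi).
have r0 : 0 <= r.
  by rewrite subr_ge0 -ler_pdivlMr.
have r2 : r < 2 * pi.
  rewrite ltrBlDr.
  have := h2; rewrite intrD ltr_pdivrMr // mulrDl mul1r addrC //.
have cr : cos r = 1.
  by have := cosDz t (-m); rewrite intrN mulNr /r => ->.
exists m.
suff : r = 0 by move/eqP; rewrite subr_eq0 => /eqP.
case: (lerP r pi) => rp.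
  apply: (@cos_inj R); rewrite ?in_itv /= ?r0 ?rp ?lexx ?pi_ge0 //.
  by rewrite cr cos0.
exfalso.
have s0 : 0 < 2 * pi - r by rewrite subr_gt0.
have s1 : 2 * pi - r <= pi by lra.
have : cos (2 * pi - r) = cos 0.
  rewrite cos0 addrC -[2 * pi]mul1r -[1 : R]/((1 : int)%:~R) cosDz cosN //.
move/(@cos_inj R); rewrite !in_itv /= ?(ltW s0) s1 lexx pi_ge0 => /(_ isT isT) e.
by rewrite e ltxx in s0.
Qed.
End Cos.


Lemma Lambda_cong (R : realType) k g (hg : (1 < g)%N) (theta : dcoord k g -> R) :
  Lambda theta -> forall x, exists m : int,
    phase theta x - phase theta [ffun => 0] = m%:~R * (2 * pi).
Proof.
rewrite /Lambda /Phi_abs => hL x.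
set w : R := (g%:R ^+ k)^-1.
set ph := phase theta.
have gk0 : (g%:R ^+ k : R) != 0 by rewrite expf_eq0 pnatr_eq0 negb_and; apply/orP; right; rewrite -lt0n ltnW.
have w0 : w != 0 by rewrite invr_eq0.
have sw : \sum_(y : {ffun 'I_k -> 'Z_g}) w = 1.
  rewrite sumr_const card_ffun !card_ord Zp_cast //.
  by rewrite -mulr_natr natrX mulVf.
set S := _ + _ in hL.
have S0 : 0 <= S by rewrite /S addr_ge0 // sqr_ge0.
have S1 : S = 1 by rewrite -(sqr_sqrtr S0) hL expr1n.
have eS : S = \sum_(x : {ffun 'I_k -> 'Z_g}) \sum_(y : {ffun 'I_k -> 'Z_g}) w * w * cos (ph x - ph y).
  rewrite /S /Phi_re /Phi_im !expr2 !mulr_suml -big_split /=; apply eq_bigr => a _.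
  rewrite !mulr_sumr -big_split /=; apply eq_bigr => b _; rewrite cosB /ph /w; ring.
have e1 : 1 = \sum_(x : {ffun 'I_k -> 'Z_g}) \sum_(y : {ffun 'I_k -> 'Z_g}) w * w.
  rewrite -[LHS]mulr1 -{1}sw mulr_suml; apply eq_bigr => a _.
  by rewrite -sw mulr_sumr.
have e0 : \sum_(x : {ffun 'I_k -> 'Z_g}) \sum_(y : {ffun 'I_k -> 'Z_g}) w * w * (1 - cos (ph x - ph y)) = 0.
  have : \sum_(x : {ffun 'I_k -> 'Z_g}) \sum_(y : {ffun 'I_k -> 'Z_g}) (w * w - w * w * cos (ph x - ph y)) = 0.
    under eq_bigr => a _ do rewrite sumrB.
    by rewrite sumrB -e1 -eS S1 subrr.
  move=> h; apply: (etrans _ h).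
  by apply: eq_bigr => a _; apply eq_bigr => b _; rewrite mulrBr mulr1.
have nn : forall a b, 0 <= w * w * (1 - cos (ph a - ph b)).
  by move=> a b; apply: mulr_ge0; [rewrite -expr2; exact: sqr_ge0 | rewrite subr_ge0 cos_le1].
have nn2 : forall a : {ffun 'I_k -> 'Z_g}, true -> 0 <= \sum_(b : {ffun 'I_k -> 'Z_g}) w * w * (1 - cos (ph a - ph b)).
  by move=> a _; apply: sumr_ge0 => b _; apply: nn.
have := psumr_eq0P nn2 e0 (i := x) isT.
move/(psumr_eq0P (fun b _ => nn x b)) => /(_ [ffun => 0] isT) /eqP.
rewrite mulf_eq0 mulf_eq0 (negbTE w0) /= subr_eq0 => /eqP /esym /cos_eq1.
by [].
Qed.


Lemma sum_sig (R : zmodType) (T : finType) (P : pred T) (F : T -> R) :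
  \sum_(p : {t | P t}) F (val p) = \sum_(t | P t) F t.
Proof.
symmetry.
rewrite (reindex_omap (val : {t | P t} -> T) insub); last by move=> i Pi; rewrite insubT.
by apply: eq_bigl => -[i iP] /=; rewrite iP insubT /= eqxx.
Qed.

Lemma sum_dcoord (R : zmodType) k g (F : 'I_k * 'I_k * 'Z_g -> R) :
  \sum_(p : dcoord k g) F (val p) =
  \sum_(t | (nat_of_ord t.1.1 < nat_of_ord t.1.2)%N && (t.2 != 0)) F t.
Proof. exact: sum_sig. Qed.

Definition th (R : realType) k g (theta : dcoord k g -> R) (i j : 'I_k) (a : 'Z_g) : R :=
  if @insub _ _ (dcoord k g) ((i, j), a) is Some p then theta p else 0.

Lemma th_val (R : realType) k g (theta : dcoord k g -> R) (p : dcoord k g) :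
  th theta (ci p) (cj p) (ca p) = theta p.
Proof.
by rewrite /th; case: p => [[[i j] a] hp] /=; rewrite insubT.
Qed.

Lemma th_out (R : realType) k g (theta : dcoord k g -> R) i j a :
  ~~ ((nat_of_ord i < nat_of_ord j)%N && (a != 0)) -> th theta i j a = 0.
Proof. by move=> h; rewrite /th insubN. Qed.

Lemma th0 (R : realType) k g (theta : dcoord k g -> R) i j : th theta i j 0 = 0.
Proof. by rewrite th_out // eqxx andbF. Qed.

Lemma thlt (R : realType) k g (theta : dcoord k g -> R) i j a :
  ~~ (nat_of_ord i < nat_of_ord j)%N -> th theta i j a = 0.
Proof. by move=> h; rewrite th_out // (negbTE h). Qed.

Lemma phase_diff (R : realType) k g (theta : dcoord k g -> R) x :
  phase theta x - phase theta [ffun => 0] =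
  \sum_(i : 'I_k) \sum_(j : 'I_k) th theta i j (x i - x j).
Proof.
rewrite /phase -sumrB.
have e1 : forall p : dcoord k g, theta p * Zvec R x p - theta p * Zvec R [ffun => 0] p =
   (fun t : 'I_k * 'I_k * 'Z_g => th theta t.1.1 t.1.2 t.2 * (x t.1.1 - x t.1.2 == t.2)%:R) (val p).
  move=> p; rewrite -mulrBr /= -th_val /Zvec !ffunE subrr.
  have : ca p != 0 by case/andP: (valP p).
  rewrite eq_sym => /negbTE ->; rewrite /ci /cj /ca.
  by case: (x _ - x _ == _) => /=; [rewrite opprK subrK mulr1 | rewrite subrr mulr0].
rewrite (eq_bigr _ (fun p _ => e1 p)).
rewrite (sum_dcoord (fun t : 'I_k * 'I_k * 'Z_g => th theta t.1.1 t.1.2 t.2 * (x t.1.1 - x t.1.2 == t.2)%:R)).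
rewrite big_mkcond /=.
rewrite (eq_bigr (fun t : 'I_k * 'I_k * 'Z_g => th theta t.1.1 t.1.2 t.2 * (x t.1.1 - x t.1.2 == t.2)%:R)); last first.
  by move=> t _; case: ifP => // h; rewrite th_out ?h // mul0r.
rewrite -(pair_big xpredT xpredT (fun ij a => th theta ij.1 ij.2 a * (x ij.1 - x ij.2 == a)%:R)) /=.
rewrite -(pair_big xpredT xpredT (fun i j => \sum_a th theta i j a * (x i - x j == a)%:R)) /=.
apply: eq_bigr => i _; apply: eq_bigr => j _.
rewrite (bigD1 (x i - x j)) //= eqxx mulr1 big1 ?addr0 // => a /negbTE ne.
by rewrite eq_sym ne mulr0.
Qed.


Lemma split2 (R : zmodType) (T : finType) (i j : T) (F : T -> R) : i != j ->
  \sum_m F m = F i + F j + \sum_(m | (m != i) && (m != j)) F m.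
Proof.
move=> hij; rewrite (bigD1 i) //= (bigD1 j) /=; last by rewrite eq_sym.
by rewrite addrA.
Qed.

Definition x2 k g (i j : 'I_k) (a b : 'Z_g) : {ffun 'I_k -> 'Z_g} :=
  [ffun l => if l == i then a else if l == j then b else 0].

Definition GG (R : zmodType) k g (t : 'I_k -> 'I_k -> 'Z_g -> R) (x : {ffun 'I_k -> 'Z_g}) :=
  \sum_(i : 'I_k) \sum_(j : 'I_k) t i j (x i - x j).

Lemma rearr6 (R : zmodType) (x y A B C D : R) :
  x + A + (y + B) + (C + D) = x + y + (A + C) + (B + D).
Proof.
rewrite -!addrA; congr (_ + _); rewrite addrCA; congr (_ + _).
by rewrite (addrCA B).
Qed.

Lemma G2 (R : zmodType) k g (t : 'I_k -> 'I_k -> 'Z_g -> R)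
  (t0 : forall i j, t i j 0 = 0) i j a b : i != j ->
  GG t (x2 i j a b) = t i j (a - b) + t j i (b - a)
    + \sum_(m | (m != i) && (m != j)) (t i m a + t m i (- a))
    + \sum_(m | (m != i) && (m != j)) (t j m b + t m j (- b)).
Proof.
move=> hij.
have xi : x2 i j a b i = a by rewrite ffunE eqxx.
have xj : x2 i j a b j = b by rewrite ffunE eq_sym (negbTE hij) eqxx.
have xo : forall m, (m != i) && (m != j) -> x2 i j a b m = 0.
  by move=> m /andP[/negbTE h1 /negbTE h2]; rewrite ffunE h1 h2.
rewrite /GG (split2 _ hij) xi xj.
rewrite (split2 _ hij) xi xj subrr t0 add0r.
rewrite (split2 (fun m => t j m (b - x2 i j a b m)) hij) xi xj subrr t0 addr0.
have e1 : \sum_(m | (m != i) && (m != j)) t i m (a - x2 i j a b m) = \sum_(m | (m != i) && (m != j)) t i m a.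
  by apply: eq_bigr => m /xo ->; rewrite subr0.
have e2 : \sum_(m | (m != i) && (m != j)) t j m (b - x2 i j a b m) = \sum_(m | (m != i) && (m != j)) t j m b.
  by apply: eq_bigr => m /xo ->; rewrite subr0.
have e3 : \sum_(m | (m != i) && (m != j)) \sum_(j0 < k) t m j0 (x2 i j a b m - x2 i j a b j0)
   = \sum_(l | (l != i) && (l != j)) (t l i (- a) + t l j (- b)).
  apply: eq_bigr => l /[dup] hl /xo ->; rewrite (split2 _ hij) xi xj !sub0r big1 ?addr0 //.
  by move=> m /xo ->; rewrite subr0 t0.
rewrite e1 e2 e3.
rewrite !big_split /=.
set A := \sum_(m | _) t i m a; set B := \sum_(m | _) t j m b.
set C := \sum_(m | _) t m i (- a); set D := \sum_(m | _) t m j (- b).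
exact: rearr6.
Qed.



Section I2.
Variable R : realType.
Definition I2 (u : R) := exists m : int, u = m%:~R * (2 * pi).

Lemma I2_0 : I2 0. Proof. by rewrite /I2; exists 0; rewrite mul0r. Qed.
Lemma I2_D u v : I2 u -> I2 v -> I2 (u + v).
Proof. rewrite /I2 => -[m ->] [n ->]. exists (m + n). by rewrite intrD (mulrDl (m%:~R)). Qed.
Lemma I2_N u : I2 u -> I2 (- u).
Proof. rewrite /I2 => -[m ->]. exists (- m). by rewrite intrN mulNr. Qed.
Lemma I2_B u v : I2 u -> I2 v -> I2 (u - v).
Proof. by move=> hu hv; apply: I2_D => //; apply: I2_N. Qed.
Lemma I2_Mz (z : int) u : I2 u -> I2 (z%:~R * u).
Proof. rewrite /I2 => -[m ->]. exists (z * m). by rewrite intrM mulrA. Qed.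
Lemma I2_Mn (n : nat) u : I2 u -> I2 (n%:R * u).
Proof. by move=> h; have := I2_Mz n h. Qed.
Lemma I2_eq u v : u = v -> I2 u -> I2 v. Proof. by move=> ->. Qed.
Lemma I2_sum (T : finType) (P : pred T) (F : T -> R) :
  (forall i, P i -> I2 (F i)) -> I2 (\sum_(i | P i) F i).
Proof.
move=> h; elim/big_ind: _ => //; first exact: I2_0.
exact: I2_D.
Qed.
End I2.

Section Add.
Variables (R : realType) (k g' : nat) (theta : dcoord k g'.+2 -> R).
Hypothesis hG : forall x, I2 (GG (th theta) x).
Local Notation t := (th theta).

Lemma RB0 (j : 'I_k) (P : pred 'I_k) :
  \sum_(m | P m) (t j m 0 + t m j (- 0)) = 0.
Proof. by rewrite big1 // => m _; rewrite oppr0 !th0 addr0. Qed.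

Lemma add_rel (i j : 'I_k) : (nat_of_ord i < nat_of_ord j)%N -> forall a c : 'Z_g'.+2,
  I2 (t i j (a + c) - t i j a - t i j c).
Proof.
move=> hij a c.
have nij : i != j by apply/negP => /eqP e; rewrite e ltnn in hij.
have tji : forall u, t j i u = 0 by move=> u; rewrite thlt // -leqNgt ltnW.
have := I2_B (I2_B (hG (x2 i j a (- c))) (hG (x2 i j a 0))) (hG (x2 i j 0 (- c))).
rewrite !(@G2 R k _ _ (@th0 R k _ theta)) //.
rewrite !RB0 !tji !subr0 !sub0r !opprK !addr0 ?add0r.
apply: I2_eq.
set A := \sum_(m | _) _; set B := \sum_(m | _) _.
ring.
Qed.

Lemma nat_rel (i j : 'I_k) : (nat_of_ord i < nat_of_ord j)%N -> forall n : nat,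
  I2 (t i j (n%:R) - n%:R * t i j 1).
Proof.
move=> hij; elim=> [|n IH]; first by rewrite th0 mul0r subr0; exact: I2_0.
have := I2_D (add_rel hij n%:R 1) IH.
apply: I2_eq; rewrite -[n.+1]addn1 !natrD mulrDl mul1r; ring.
Qed.

Lemma val_rel (i j : 'I_k) : (nat_of_ord i < nat_of_ord j)%N -> forall a : 'Z_g'.+2,
  I2 (t i j a - (nat_of_ord a)%:R * t i j 1).
Proof. by move=> hij a; have := nat_rel hij (nat_of_ord a); rewrite natr_Zp. Qed.

Lemma c_exists (i j : 'I_k) : (nat_of_ord i < nat_of_ord j)%N ->
  exists c : 'I_g'.+2, I2 (t i j 1 - (nat_of_ord c)%:R * (2 * pi) / g'.+2%:R).
Proof.
move=> hij.
have := nat_rel hij g'.+2.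
have -> : (g'.+2%:R : 'Z_g'.+2) = 0 by apply: pchar_Zp.
rewrite th0 sub0r => /I2_N; rewrite opprK => -[m hm].
have g0 : (g'.+2%:R : R) != 0 by rewrite pnatr_eq0.
have r0 : (0 <= (m %% g'.+2)%Z)%R by rewrite modz_ge0.
have rg : ((m %% g'.+2)%Z < g'.+2)%R by rewrite ltz_pmod.
have dm := divz_eq m g'.+2.
move: r0 rg dm; case: (m %% g'.+2)%Z => [c|c] //= _.
rewrite ltz_nat => cg dm.
exists (Ordinal cg); exists (m %/ g'.+2)%Z => /=.
have ht : t i j 1 = m%:~R * (2 * pi) / g'.+2%:R.
  by rewrite -hm mulrC mulKf.
rewrite ht {1}dm intrD intrM.
rewrite -[(Posz c)%:~R]/(c%:R : R) -[(Posz g'.+2)%:~R]/(g'.+2%:R : R).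
field; move: g0; rewrite -addn2 natrD addrC; exact: id.
Qed.

Lemma single_rel (i j : 'I_k) : i != j -> forall a : 'Z_g'.+2,
  I2 (\sum_m (t i m a + t m i (- a))).
Proof.
move=> hij a; have := hG (x2 i j a 0).
rewrite (@G2 R k _ _ (@th0 R k _ theta)) // RB0 addr0 subr0 sub0r.
apply: I2_eq; rewrite [RHS](split2 _ hij) !(@thlt R k _ theta i i) ?ltnn // addr0 add0r.
by [].
Qed.
End Add.


Definition alpha' (R : realType) k g (i j : 'I_k) (p : dcoord k g) : R :=
  let n := nat_of_ord (ca p) in
  if (ci p == i) && (cj p == j) then 2 * pi * n%:R / g%:R
  else if (ci p == i) && (nat_of_ord (cj p) == k.-1) then 2 * pi * (g - n)%N%:R / g%:R
  else if (ci p == j) && (nat_of_ord (cj p) == k.-1) then 2 * pi * n%:R / g%:R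
  else 0.

Lemma alphaE (R : realType) k g (q : ijpairs k) (p : dcoord k g) :
  alpha R q p = alpha' R (val q).1 (val q).2 p.
Proof. by []. Qed.

Definition cf k g (c : {ffun ijpairs k -> 'I_g}) (l m : 'I_k) : nat :=
  if @insub _ _ (ijpairs k) (l, m) is Some q then nat_of_ord (c q) else 0%N.

Lemma cf_val k g (c : {ffun ijpairs k -> 'I_g}) (q : ijpairs k) :
  cf c (val q).1 (val q).2 = c q.
Proof. by rewrite /cf; case: q => [[l m] hq] /=; rewrite insubT. Qed.

Lemma cf_out k g (c : {ffun ijpairs k -> 'I_g}) l m :
  ~~ ((nat_of_ord l < nat_of_ord m)%N && (nat_of_ord m < k.-1)%N) -> cf c l m = 0%N.
Proof. by move=> h; rewrite /cf insubN. Qed.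

Lemma sum_ijpairs (R : zmodType) k (F : 'I_k * 'I_k -> R) :
  \sum_(q : ijpairs k) F (val q) =
  \sum_(t | (nat_of_ord t.1 < nat_of_ord t.2)%N && (nat_of_ord t.2 < k.-1)%N) F t.
Proof. exact: sum_sig. Qed.

Lemma alpha_combE (R : realType) k g (c : {ffun ijpairs k -> 'I_g}) p :
  alpha_comb R c p = \sum_(l : 'I_k) \sum_(m : 'I_k) (cf c l m)%:R * alpha' R l m p.
Proof.
rewrite /alpha_comb.
rewrite (eq_bigr (fun q => (fun t : 'I_k * 'I_k => (cf c t.1 t.2)%:R * alpha' R t.1 t.2 p) (val q))); last first.
  by move=> q _; rewrite /= cf_val alphaE.
rewrite (sum_ijpairs (fun t : 'I_k * 'I_k => (cf c t.1 t.2)%:R * alpha' R t.1 t.2 p)).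
rewrite big_mkcond /=.
rewrite (eq_bigr (fun t : 'I_k * 'I_k => (cf c t.1 t.2)%:R * alpha' R t.1 t.2 p)); last first.
  by move=> t _; case: ifP => // h; rewrite cf_out ?h // mul0r.
by rewrite -(pair_big xpredT xpredT (fun l m => (cf c l m)%:R * alpha' R l m p)).
Qed.

Lemma alpha_combA (R : realType) k g (c : {ffun ijpairs k -> 'I_g}) p :
  (nat_of_ord (cj p) < k.-1)%N ->
  alpha_comb R c p = (cf c (ci p) (cj p))%:R * (2 * pi * (nat_of_ord (ca p))%:R / g%:R).
Proof.
move=> hj; rewrite alpha_combE (bigD1 (ci p)) //= [X in _ + X]big1 ?addr0; last first.
  move=> l hl; apply: big1 => m _; rewrite /alpha' eq_sym (negbTE hl) /=.
  by rewrite (ltn_eqF hj) andbF mulr0.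
rewrite (bigD1 (cj p)) //= [X in _ + X]big1 ?addr0; last first.
  move=> m hm; rewrite /alpha' eqxx eq_sym (negbTE hm) /= (ltn_eqF hj) /=.
  by rewrite andbF mulr0.
by rewrite /alpha' !eqxx.
Qed.

Lemma alpha_combB (R : realType) k g (c : {ffun ijpairs k -> 'I_g}) p :
  nat_of_ord (cj p) = k.-1 ->
  alpha_comb R c p = \sum_(m : 'I_k) (cf c (ci p) m)%:R * (2 * pi * (g - nat_of_ord (ca p))%N%:R / g%:R)
     + \sum_(l : 'I_k) (cf c l (ci p))%:R * (2 * pi * (nat_of_ord (ca p))%:R / g%:R).
Proof.
move=> hj; rewrite alpha_combE (bigD1 (ci p)) //=; congr (_ + _).
  apply: eq_bigr => m _; rewrite /alpha' eqxx hj eqxx /=.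
  case: (boolP (cj p == m)) => [/eqP <-|] //=.
  by rewrite cf_out ?hj ?ltnn ?andbF // mul0r mul0r.
rewrite [RHS](bigD1 (ci p)) //= cf_out ?ltnn // mul0r add0r.
apply: eq_bigr => l hl.
have hl' : (ci p == l) = false by rewrite eq_sym (negbTE hl).
rewrite (bigD1 (ci p)) //= [X in _ + X]big1 ?addr0.
  by rewrite /alpha' hl' /= eqxx hj eqxx.
move=> m hm.
have hm' : (ci p == m) = false by rewrite eq_sym (negbTE hm).
by rewrite /alpha' hl' hm' /= mulr0.
Qed.


Section Main.
Variables (R : realType) (k g' : nat) (theta : dcoord k g'.+2 -> R).
Hypothesis hG : forall x, I2 (GG (th theta) x).
Local Notation t := (th theta).
Local Notation G := (g'.+2).
Variable c : {ffun ijpairs k -> 'I_G}.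
Hypothesis hc : forall l m, (nat_of_ord m < k.-1)%N ->
  I2 (t l m 1 - (cf c l m)%:R * (2 * pi) / G%:R).

Lemma I2_2pi : I2 (2 * pi : R). Proof. by exists 1; rewrite mul1r. Qed.

Lemma G0' : (2 + g'%:R : R) != 0.
Proof. by rewrite -[2]/(2%:R) -natrD pnatr_eq0. Qed.

Lemma G0 : (G%:R : R) != 0. Proof. by rewrite pnatr_eq0. Qed.

Lemma exist_p (p : dcoord k G) : I2 (theta p - alpha_comb R c p).
Proof.
rewrite -th_val.
have /andP[hij _] := valP p.
rewrite -/(ci p) -/(cj p) in hij.
have jk : (nat_of_ord (cj p) < k)%N := ltn_ord _.
case: (ltnP (cj p) k.-1) => hj.
  rewrite alpha_combA //.
  have := I2_D (val_rel hG hij (ca p)) (I2_Mn (nat_of_ord (ca p)) (hc (ci p) hj)).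
  by apply: I2_eq; ring.
have ej : nat_of_ord (cj p) = k.-1 by lia.
rewrite alpha_combB //.
set i := ci p; set j := cj p; set a := ca p.
have aG : (nat_of_ord a <= G)%N by apply: ltnW; exact: (ltn_ord a).
rewrite (natrB _ aG).
set a' := nat_of_ord a.
have nij : i != j by apply/negP => /eqP e; rewrite -/i -/j e ltnn in hij.
have S := single_rel hG nij 1.
have U : I2 (\sum_(m | m != j) (a'%:R * t i m 1 + (cf c i m)%:R * (2 * pi * (G%:R - a'%:R) / G%:R))).
  apply: I2_sum => m hm.
  have hm' : (nat_of_ord m < k.-1)%N.
    have := ltn_ord m; move: hm; rewrite -(inj_eq val_inj) /= -/j ej; lia.
  have := I2_D (I2_Mn a' (hc i hm')) (I2_Mn (cf c i m) I2_2pi).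
  apply: I2_eq; field; exact: G0'.
have V : I2 (\sum_l (a'%:R * t l i (- 1) + (cf c l i)%:R * (2 * pi * a'%:R / G%:R))).
  apply: I2_sum => l _.
  case: (ltnP l i) => hli; last first.
    by rewrite thlt -?leqNgt // cf_out ?negb_and -?leqNgt ?hli // mulr0 mul0r addr0; exact: I2_0.
  have hi' : (nat_of_ord i < k.-1)%N by rewrite -ej.
  have := add_rel hG hli 1 (-1); rewrite subrr th0 sub0r => h1.
  have := I2_B (I2_Mn a' (I2_N h1)) (I2_Mn a' (hc l hi')).
  apply: I2_eq; ring.
have Ue : \sum_(m | m != j) (a'%:R * t i m 1 + (cf c i m)%:R * (2 * pi * (G%:R - a'%:R) / G%:R))
   = a'%:R * \sum_m t i m 1 - a'%:R * t i j 1 + \sum_m (cf c i m)%:R * (2 * pi * (G%:R - a'%:R) / G%:R).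
  rewrite big_split /= -mulr_sumr [in RHS](bigD1 j) //= [X in _ = _ + X](bigD1 j) //=.
  rewrite cf_out ?ej ?ltnn ?andbF // mul0r add0r; ring.
have Ve : \sum_l (a'%:R * t l i (- 1) + (cf c l i)%:R * (2 * pi * a'%:R / G%:R))
   = a'%:R * \sum_l t l i (- 1) + \sum_l (cf c l i)%:R * (2 * pi * a'%:R / G%:R).
  by rewrite big_split /= -mulr_sumr.
rewrite Ue in U; rewrite Ve in V.
rewrite big_split /= in S.
have := I2_B (I2_B (I2_D (val_rel hG hij a) (I2_Mn a' S)) U) V.
by apply: I2_eq; rewrite -/i -/j -/a -/a'; ring.
Qed.
End Main.


Lemma small_eq (R : realType) (G a b : nat) : (a < G)%N -> (b < G)%N ->
  I2 ((a%:R - b%:R) * (2 * pi) / G%:R : R) -> a = b.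
Proof.
move=> ha hb [z].
have hp := @pi_gt0 R; move: hp; generalize (@pi R) => P hp hz.
have G0 : (0 < G%:R :> R) by rewrite ltr0n; apply: leq_ltn_trans ha.
have p0 : (0 < 2 * P :> R) by rewrite mulr_gt0.
have e : (a%:R - b%:R : R) = z%:~R * G%:R.
  have e1 : (a%:R - b%:R : R) = ((a%:R - b%:R) * (2 * P) / G%:R) * G%:R / (2 * P).
    by field; rewrite (lt0r_neq0 G0) (lt0r_neq0 hp).
  by rewrite e1 hz; field; exact: lt0r_neq0.
have ha' : (a%:R + 1 <= G%:R :> R) by rewrite -[1]/(1%:R) -natrD ler_nat addn1.
have hb' : (b%:R + 1 <= G%:R :> R) by rewrite -[1]/(1%:R) -natrD ler_nat addn1.
have a0 : (0 <= a%:R :> R) by [].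
have b0 : (0 <= b%:R :> R) by [].
case: (ltrgtP z 0) => hz0.
- have : (z%:~R <= -1 :> R) by rewrite -[-1]/((-1 : int)%:~R) ler_int -ltzD1.
  move=> hz1; exfalso; nra.
- have : (1 <= z%:~R :> R) by rewrite -[1]/((1 : int)%:~R) ler_int.
  move=> hz1; exfalso; nra.
- move: e; rewrite hz0 mul0r => /eqP; rewrite subr_eq0 eqr_nat => /eqP //.
Qed.

Unset Implicit Arguments.

Theorem lemma2p9 (R : realType) (g k : nat) (hg : (2 <= g)%N) (hk : (2 <= k)%N)
  (theta : dcoord k g -> R) :
  Lambda0 theta ->
  exists! c : {ffun ijpairs k -> 'I_g}, congr_2pi theta (@alpha_comb R k g c).
Proof.
move=> [hL _].
have hG0 := Lambda_cong hg hL.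
move: theta hL hG0; case: g hg => [|[|g']] // _ theta _ hG0.
have hG : forall x, I2 (GG (th theta) x).
  by move=> x; rewrite /GG -phase_diff; exact: hG0.
have hq : forall q : ijpairs k, exists c : 'I_g'.+2,
    I2 (th theta (val q).1 (val q).2 1 - (nat_of_ord c)%:R * (2 * pi) / g'.+2%:R).
  by move=> q; apply: c_exists => //; case/andP: (valP q).
have [cfn hcfn] := fin_all_exists hq.
set c : {ffun ijpairs k -> 'I_g'.+2} := [ffun q => cfn q].
have hc : forall l m : 'I_k, (nat_of_ord m < k.-1)%N ->
    I2 (th theta l m 1 - (cf c l m)%:R * (2 * pi) / g'.+2%:R).
  move=> l m hm.
  case: (ltnP l m) => hlm; last first.
    by rewrite thlt -?leqNgt // cf_out ?negb_and -?leqNgt ?hlm // !mul0r subr0; exact: I2_0.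
  have hP : (nat_of_ord (l, m).1 < nat_of_ord (l, m).2)%N && (nat_of_ord (l, m).2 < k.-1)%N.
    by rewrite /= hlm hm.
  have := cf_val c (exist _ (l, m) hP); rewrite /= => ->.
  by have := hcfn (exist _ (l, m) hP); rewrite ffunE.
exists c; split.
  by move=> p; exact: (exist_p hG hc p).
move=> c2 h2; apply/ffunP => q; apply: val_inj.
case: q => [[l m] hq0]; have /andP[hlm hm] := hq0.
pose one : 'Z_g'.+2 := 1%R.
have hP : (nat_of_ord ((l, m), one).1.1 < nat_of_ord ((l, m), one).1.2)%N
   && (((l, m), one).2 != 0) by rewrite /= hlm.
pose p : dcoord k g'.+2 := exist _ ((l, m), one) hP.
have e1 := exist_p hG hc p.
have e2 := h2 p.
have v1 : (1 %% (Zp_trunc g'.+2).+2)%N = 1%N by rewrite modn_small.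
have := I2_B e2 e1.
rewrite !alpha_combA //= v1 /ci /cj /=.
have -> := cf_val c (exist _ (l, m) hq0).
have -> := cf_val c2 (exist _ (l, m) hq0).
move=> h; apply: (@small_eq R g'.+2) => //.
move: h; apply: I2_eq.
set u := (c2 _)%:R; set v := (c _)%:R; set th := theta p; set P := pi.
rewrite mulr1; ring.
Qed.
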